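(* Let $G$ be a loopless graph and $n$ a positive integer. If $c$ and $d$ are two proper $n$-edge colorings of $G$ with $c\sim d$, and there is a vertex $v$ such that $c(e)=d(e)$ for every edge $e$ incident to $v$, then there exists a sequence of edge-Kempe switches transforming $c$ into $d$ in which the colors on the edges incident to $v$ are never changed.
   Context: Graphs are finite and may have multiple edges. A proper $n$-edge coloring assigns to each edge a color from $\{1,\dots,n\}$ so that edges sharing an endpoint receive different colors. For a proper edge coloring and two distinct colors $a,b$, an edge-Kempe chain is a connected component of the subgraph formed by the edges colored $a$ or $b$; an edge-Kempe switch interchanges the colors $a$ and $b$ on one such chain, producing another proper edge coloring. We write $c\sim d$ if $d$ can be obtained from $c$ by a finite sequence of edge-Kempe switches. *)

(* Defs.v *)
From mathcomp Require Import all_boot.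
Set Implicit Arguments. Unset Strict Implicit. Unset Printing Implicit Defensive.

(* A finite multigraph: vertex type V, edge type E, each edge e has
   endpoints (src e) and (dst e).  Multiple edges = distinct e with same ends. *)
Section EdgeKempe.
Variables (V E : finType) (src dst : E -> V).

Definition loopless : Prop := forall e : E, src e != dst e.

Definition incident (v : V) (e : E) : bool := (src e == v) || (dst e == v).

Definition share (e f : E) : bool :=
  [exists x : V, incident x e && incident x f].

Variable n : nat.

(* An n-edge coloring: colors are 'I_n, standing for {1,...,n}. *)
Definition coloring := {ffun E -> 'I_n}.

Definition proper_coloring (c : coloring) : Prop :=
  forall e f : E, e != f -> share e f -> c e != c f.

Definition ab_adj (c : coloring) (a b : 'I_n) (e f : E) : bool :=
  [&& c e \in [:: a; b], c f \in [:: a; b] & share e f].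

Definition kchain (c : coloring) (a b : 'I_n) (e0 : E) : pred E :=
  fun f => (c e0 \in [:: a; b]) && connect (ab_adj c a b) e0 f.

Definition swap_col (a b x : 'I_n) : 'I_n :=
  if x == a then b else if x == b then a else x.

Definition kempe_switch (c d : coloring) : bool :=
  [exists a : 'I_n, exists b : 'I_n, exists e0 : E,
     [&& a != b, c e0 \in [:: a; b] &
      [forall f : E, d f == (if kchain c a b e0 f then swap_col a b (c f) else c f)]]].

Definition kempe_equiv (c d : coloring) : bool := connect kempe_switch c d.

Definition fixes_at (v : V) (c d : coloring) : bool :=
  [forall e : E, incident v e ==> (d e == c e)].

End EdgeKempe.

(* Main.v *)
Require Import Defs.
From mathcomp Require Import all_boot all_fingroup.
Set Implicit Arguments. Unset Strict Implicit. Unset Printing Implicit Defensive.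

Section S.
Variables (V E : finType) (src dst : E -> V) (n : nat).
Local Notation col := (coloring E n).
Local Notation ks := (kempe_switch src dst (n:=n)).
Local Notation adj := (ab_adj src dst (n:=n)).
Local Notation K := (kchain src dst (n:=n)).

Definition agree (Q : pred E) (x g : col) := [forall f, Q f ==> (g f == x f)].
Definition FQ Q x y := exists s, [/\ path ks x s, last x s = y & all (agree Q x) s].

Lemma agree_refl Q x : agree Q x x.
Proof. by apply/forallP => f; rewrite eqxx implybT. Qed.

Lemma agree_trans Q x y z : agree Q x y -> agree Q y z -> agree Q x z.
Proof.
move=> /forallP H1 /forallP H2; apply/forallP => f; apply/implyP => Qf.
by move: (H1 f) (H2 f); rewrite Qf /= => /eqP <- /eqP ->.
Qed.

Lemma FQ_refl Q x : FQ Q x x.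
Proof. by exists [::]. Qed.

Lemma FQ_agree Q x y : FQ Q x y -> agree Q x y.
Proof.
case=> s [_ <- a]; have : all (agree Q x) (x :: s) by rewrite /= agree_refl.
by move/allP; apply; apply: mem_last.
Qed.

Lemma FQ_trans Q x y z : FQ Q x y -> FQ Q y z -> FQ Q x z.
Proof.
move=> F1; have axy := FQ_agree F1; case: F1 => s1 [p1 l1 a1] [s2 [p2 l2 a2]].
exists (s1 ++ s2); rewrite cat_path last_cat l1 p1 p2 l2 all_cat a1; split=> //.
by apply/allP => g /(allP a2) h; apply: agree_trans axy h.
Qed.

Lemma FQ_weak (Q Q' : pred E) x y : (forall f, Q' f -> Q f) -> FQ Q x y -> FQ Q' x y.
Proof.
move=> H [s [p l a]]; exists s; split=> //; apply/allP => g /(allP a) /forallP h.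
apply/forallP => f; apply/implyP => /H Qf; by move: (h f); rewrite Qf.
Qed.

Lemma FQ1 Q x y : ks x y -> agree Q x y -> FQ Q x y.
Proof. by move=> h a; exists [:: y]; rewrite /= h a. Qed.

Definition rl (p : {perm 'I_n}) (x : col) : col := [ffun f => p (x f)].

Lemma swap_rl (p : {perm 'I_n}) a b u :
  swap_col (p a) (p b) (p u) = p (swap_col a b u).
Proof. by rewrite /swap_col !(inj_eq perm_inj); do 2?case: ifP. Qed.

Lemma mem_rl (p : {perm 'I_n}) a b u :
  (p u \in [:: p a; p b]) = (u \in [:: a; b]).
Proof. by rewrite !inE !(inj_eq perm_inj). Qed.

Lemma ks_rl p x y : ks x y -> ks (rl p x) (rl p y).
Proof.
case/existsP => a /existsP [b /existsP [e0 /and3P [ab xe0 /forallP H]]].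
apply/existsP; exists (p a); apply/existsP; exists (p b); apply/existsP; exists e0.
have kE : K (rl p x) (p a) (p b) e0 =1 K x a b e0.
  move=> f; rewrite /kchain ffunE mem_rl; congr andb; apply: eq_connect => g h.
  by rewrite /ab_adj !ffunE !mem_rl.
rewrite (inj_eq perm_inj) ab ffunE mem_rl xe0 /=; apply/forallP => f.
rewrite !ffunE kE; move/eqP: (H f) => ->; case: ifP => _ //.
by rewrite swap_rl.
Qed.

Lemma FQ_rl p Q x y : FQ Q x y -> FQ Q (rl p x) (rl p y).
Proof.
case=> s [pth l a]; exists (map (rl p) s); split.
- elim: s x pth {l a} => //= z s IH x /andP [h1 h2]; by rewrite ks_rl // IH.
- by rewrite last_map l.
- rewrite all_map; apply/allP => g /(allP a) /forallP h /=; apply/forallP => f.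
  apply/implyP => Qf; move: (h f); rewrite Qf !ffunE => /eqP -> //.
Qed.

Lemma swap_colK (a b u : 'I_n) : swap_col a b (swap_col a b u) = u.
Proof.
rewrite /swap_col; case: (u =P a) => [->|na].
  rewrite eqxx; case: (b =P a) => [->|_] //; by rewrite eqxx.
case: (u =P b) => [->|nb].
  rewrite eqxx; case: (a =P a) => //.
by move/eqP/negbTE: na => ->; move/eqP/negbTE: nb => ->.
Qed.

Lemma swap_out (a b u : 'I_n) : u \notin [:: a; b] -> swap_col a b u = u.
Proof. by rewrite !inE /swap_col => /norP [/negbTE -> /negbTE ->]. Qed.

Lemma swap_mem (a b u : 'I_n) : (swap_col a b u \in [:: a; b]) = (u \in [:: a; b]).
Proof.
rewrite /swap_col; case: (u =P a) => [->|na]; first by rewrite !inE !eqxx !orbT.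
case: (u =P b) => [->|nb]; first by rewrite !inE !eqxx orbT.
by [].
Qed.

Lemma tpermS (a b u : 'I_n) : tperm a b u = swap_col a b u.
Proof. by rewrite permE. Qed.


Lemma closure_connect (P : pred E) (r : rel E) x y :
  (forall f g, P f -> r f g -> P g) -> P x -> connect r x y -> P y.
Proof.
move=> H Px /connectP [p pth ->]; elim: p x Px pth => //= z p IH x Px /andP [r1 pr].
exact: IH (H _ _ Px r1) pr.
Qed.

Lemma adj_sym (x : col) (a b : 'I_n) (f g : E) : adj x a b f g -> adj x a b g f.
Proof.
case/and3P => h1 h2 /existsP [w /andP [i1 i2]]; rewrite /ab_adj h1 h2 /=.
by apply/existsP; exists w; rewrite i1 i2.
Qed.

Lemma K_col (x : col) (a b : 'I_n) (e0 f : E) : K x a b e0 f -> x f \in [:: a; b].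
Proof.
case/andP => h c.
apply: (closure_connect (P := fun g => x g \in [:: a; b])) c => //.
by move=> g g' _ /and3P [_ -> _].
Qed.

Definition swP (a b : 'I_n) (P : pred E) (x : col) : col :=
  [ffun f => if P f then swap_col a b (x f) else x f].

Lemma swP_mem (a b : 'I_n) (P : pred E) (x : col) (f : E) : (swP a b P x f \in [:: a; b]) = (x f \in [:: a; b]).
Proof. by rewrite ffunE; case: ifP; rewrite ?swap_mem. Qed.

Lemma adj_swP (a b : 'I_n) (P : pred E) (x : col) : adj (swP a b P x) a b =2 adj x a b.
Proof. by move=> f g; rewrite /ab_adj !swP_mem. Qed.

Lemma ks_chain (x : col) (a b : 'I_n) (e0 : E) : a != b -> x e0 \in [:: a; b] ->
  ks x (swP a b (K x a b e0) x).
Proof.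
move=> ab xe; apply/existsP; exists a; apply/existsP; exists b; apply/existsP.
by exists e0; rewrite ab xe /=; apply/forallP => f; rewrite ffunE.
Qed.

Lemma swP_none (a b : 'I_n) (P : pred E) (x : col) : P =1 xpred0 -> swP a b P x = x.
Proof. by move=> P0; apply/ffunP => f; rewrite ffunE P0. Qed.

Lemma swap_set (a b : 'I_n) : a != b -> forall m (P : pred E) (x : col), #|P| <= m ->
  (forall f, P f -> x f \in [:: a; b]) ->
  (forall f g, P f -> adj x a b f g -> P g) ->
  FQ (predC P) x (swP a b P x).
Proof.
move=> ab; elim=> [|m IH] P x cP Pcol Pcl;
  (case: (pickP P) => [f0 Pf0|P0]; last by rewrite swP_none //; apply: FQ_refl).
  have : 0 < #|P| by apply/card_gt0P; exists f0.
  by rewrite lt0n -leqn0 cP.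
set Kx := K x a b f0.
have xf0 := Pcol f0 Pf0.
have KP : forall f, Kx f -> P f.
  by move=> f /andP [_ c]; exact: closure_connect Pcl Pf0 c.
pose P' := [pred f | P f && ~~ Kx f].
have Kf0 : Kx f0 by rewrite /Kx /kchain xf0 connect0.
have cP' : #|P'| <= m.
  have : #|P'| < #|P|.
    apply: proper_card; apply/properP; split.
      by apply/subsetP => f; rewrite !inE /= => /andP [].
    by exists f0; rewrite !unfold_in /= ?Pf0 ?Kf0.
  by move=> h; rewrite -ltnS; apply: leq_trans h cP.
have F2 := IH P' (swP a b Kx x) cP'.
have e : swP a b P' (swP a b Kx x) = swP a b P x.
  apply/ffunP => f; rewrite !ffunE /=.
  case Kf: (Kx f); first by rewrite (KP _ Kf).
  by rewrite andbT.
rewrite -e; apply: FQ_trans (FQ1 (ks_chain ab xf0) _) (FQ_weak _ (F2 _ _)).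
- apply/forallP => f; apply/implyP => /= nP; rewrite ffunE.
  by case: ifP => // /KP Pf; rewrite Pf in nP.
- by move=> f /= /negbTE ->.
- by move=> f; rewrite ffunE /= => /andP [Pf /negbTE ->]; apply: Pcol.
- move=> f g /andP [Pf nK]; rewrite adj_swP => h; rewrite /= (Pcl _ _ Pf h) /=.
  apply/negP => /andP [_ c]; move/negP: nK; apply.
  by rewrite /Kx /kchain xf0 /= (connect_trans c) // connect1 // adj_sym.
Qed.


Lemma step (v : V) (x y : col) (p : {perm 'I_n}) : ks x y ->
  exists p', FQ (incident src dst v) (rl p x) (rl p' y).
Proof.
case/existsP => a /existsP [b /existsP [e0 /and3P [ab xe0 /forallP H]]].
have yE : y = swP a b (K x a b e0) x by apply/ffunP => f; rewrite ffunE; apply/eqP.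
subst y; set Kx := K x a b e0.
case: (boolP [exists e, incident src dst v e && Kx e]) =>
   [/existsP [e1 /andP [ie1 Ke1]] | none].
- exists (tperm a b * p)%g.
  pose P := [pred f | (x f \in [:: a; b]) && ~~ Kx f].
  have -> : rl (tperm a b * p)%g (swP a b Kx x) = rl p (swP a b P x).
    apply/ffunP => f; rewrite !ffunE permM tpermS /=; congr (p _).
    case Kf: (Kx f) => /=; first by rewrite swap_colK andbF.
    by rewrite andbT; case: ifP => // /negbT; exact: swap_out.
  have inK : forall f, x f \in [:: a; b] -> adj x a b e1 f -> Kx f.
    move=> f xf h; case/andP: (Ke1) => _ c1.
    by rewrite /Kx /kchain xe0 /= (connect_trans c1) // connect1.
  apply: FQ_rl; apply: (FQ_weak (Q := predC P)); last apply: (@swap_set a b ab #|P|) => //.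
  + move=> f iv /=; apply/negP; case/andP => xf nK; move/negP: nK; apply.
    apply: (inK f xf); rewrite /ab_adj (K_col Ke1) xf /=.
    by apply/existsP; exists v; rewrite ie1 iv.
  + by move=> f /andP [].
  + move=> f g /andP [_ nK] h; case/and3P: (h) => _ xg _; rewrite /= xg /=.
    apply/negP => /andP [_ c]; move/negP: nK; apply.
    by rewrite /Kx /kchain xe0 /= (connect_trans c) // connect1 // adj_sym.
- exists p; apply: FQ1; first by apply: ks_rl; apply: ks_chain.
  apply/forallP => f; apply/implyP => iv; rewrite !ffunE.
  case: ifP => // Kf; move/existsPn: none => /(_ f).
  by rewrite iv Kf.
Qed.

Lemma final (v : V) (d : col) : forall m (p : {perm 'I_n}),
  #|[pred u | p u != u]| <= m ->
  (forall e, incident src dst v e -> p (d e) = d e) ->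
  FQ (incident src dst v) (rl p d) d.
Proof.
elim=> [|m IH] p cp hp;
  (case: (pickP [pred u | p u != u]) => [a /= pa | none]; last first).
- have -> : rl p d = d.
    by apply/ffunP => f; rewrite ffunE; move/(_ (d f)): none => /= /negbFE /eqP.
  exact: FQ_refl.
- have : 0 < #|[pred u | p u != u]| by apply/card_gt0P; exists a.
  by rewrite lt0n -leqn0 cp.
- have -> : rl p d = d.
    by apply/ffunP => f; rewrite ffunE; move/(_ (d f)): none => /= /negbFE /eqP.
  exact: FQ_refl.
pose b := p a.
have ab : a != b by rewrite eq_sym.
have hv : forall e, incident src dst v e -> d e \notin [:: a; b].
  move=> e /hp he; rewrite !inE; apply/norP; split; apply/eqP => de.
    by rewrite de in he; rewrite he eqxx in pa.
  rewrite de in he; have : p b = p a by rewrite he.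
  by move/perm_inj => h; move: pa; rewrite -/b h eqxx.
pose P := [pred f | rl p d f \in [:: a; b]].
have F1 : FQ (incident src dst v) (rl p d) (rl (p * tperm a b)%g d).
  have -> : rl (p * tperm a b)%g d = swP a b P (rl p d).
    apply/ffunP => f; rewrite !ffunE permM tpermS /=.
    by case: ifP => // /negbT; rewrite ffunE; exact: swap_out.
  apply: FQ_weak (@swap_set a b ab #|P| P _ _ _ _) => //.
  + by move=> e iv /=; rewrite ffunE (hp _ iv); exact: hv.
  + by move=> f g _ /and3P [].
apply: FQ_trans F1 (IH _ _ _).
- have : #|[pred u | (p * tperm a b)%g u != u]| < #|[pred u | p u != u]|.
    apply: proper_card; apply/properP; split.
      apply/subsetP => u; rewrite !unfold_in /= permM tpermS; apply: contra => /eqP pu.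
      rewrite pu swap_out //; rewrite !inE; apply/norP; split; apply/eqP => ue.
        by rewrite -ue pu eqxx in pa.
      by move: pu; rewrite ue => /perm_inj h; move: pa; rewrite -/b h eqxx.
    by exists a; rewrite !unfold_in /= ?pa // permM tpermR eqxx.
  by move=> h; rewrite -ltnS; apply: leq_trans h cp.
- by move=> e iv; rewrite permM hp // tpermS swap_out // hv.
Qed.

Lemma main_thm (c d : col) (v : V) : kempe_equiv src dst (n:=n) c d ->
  (forall e : E, incident src dst v e -> c e = d e) ->
  exists s : seq col,
      [/\ path ks c s, last c s = d & all (fixes_at src dst (n:=n) v c) s].
Proof.
move=> /connectP [s pth ->] hv.
have main : forall s x p, path ks x s -> FQ (incident src dst v) c (rl p x) ->
    exists p', FQ (incident src dst v) c (rl p' (last x s)).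
  elim=> [|y s' IH] x p /=; first by exists p.
  case/andP => h1 h2 F; case: (step v p h1) => p' F'.
  exact: IH h2 (FQ_trans F F').
have r1 : rl 1%g c = c by apply/ffunP => f; rewrite ffunE perm1.
case: (main s c 1%g pth) => [|p F]; first by rewrite r1; exact: FQ_refl.
have Fd := FQ_trans F (final (leqnn _) _).
case: (Fd _) => [e iv|s' [h1 h2 h3]]; last by exists s'.
move/forallP: (FQ_agree F) => /(_ e); rewrite iv ffunE /= => /eqP ->.
by rewrite hv.
Qed.

End S.

Theorem theorem5 (V E : finType) (src dst : E -> V) (n : nat) :
  loopless src dst -> 0 < n ->
  forall c d : coloring E n,
    proper_coloring src dst c -> proper_coloring src dst d ->
    kempe_equiv src dst (n:=n) c d ->
    forall v : V, (forall e : E, incident src dst v e -> c e = d e) ->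
    exists s : seq (coloring E n),
      [/\ path (kempe_switch src dst (n:=n)) c s, last c s = d &
          all (fixes_at src dst (n:=n) v c) s].
Proof.
move=> _ _ c d _ _ h v hv; exact: main_thm h hv.
Qed.
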